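(* Let $C\subset\mathbb R^3$ be an embedded curve (closed or non-closed) with nowhere vanishing curvature, and let $F\in\mathcal D(|C|)$ be a normal form. Then $F(\Omega_\epsilon)\cap\check F(\Omega_\epsilon)=C$ for all sufficiently small $\epsilon>0$. Moreover, the origami map $\Phi_F$ has no self-intersections (on $\Omega_\epsilon$ for sufficiently small $\epsilon>0$).
   Context: $C$ has length $l>0$ and an orientation; $-C$ is the oppositely oriented curve. $J=[-l/2,l/2]$ if $C$ is non-closed, $J=\mathbb R/l\mathbb Z$ if closed; $\Omega_\epsilon:=J\times(-\epsilon,\epsilon)$. A developable strip along $C$ is the germ of a $C^\infty$ embedding $f(u,v)=f(u,0)+v\,\xi_f(u)$ with $\mathbf c_f(u)=f(u,0)$ parametrizing $C$, $\xi_f$ a unit vector field, and zero Gaussian curvature; with the Frenet frame $(\mathbf e,\mathbf n,\mathbf b)$ of $\mathbf c_f$ write $\xi_f=\cos\beta_f\,\mathbf e+\sin\beta_f(\cos\alpha_f\,\mathbf n+\sin\alpha_f\,\mathbf b)$. $\mathcal D(C)$: strips with $\mathbf c_f$ inducing the orientation of $C$ and $0<|\cos\alpha_f|<1$, normalized so $0<|\alpha_f|<\pi/2$ (first angular function), $0<\beta_f<\pi$. $\mathcal D(|C|)=\mathcal D(C)\cup\mathcal D(-C)$. A normal form is such a strip $F(s,v)$ defined near $J\times\{0\}$ with $s\mapsto F(s,0)$ an arc-length parametrization of $C$; it is determined by this parametrization and its first angular function (zero Gaussian curvature being equivalent to $\cot\beta_F=(\alpha_F'+\tau)/(\kappa\sin\alpha_F)$).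 The dual $\check F$ is the normal form with $\check F(s,0)=F(s,0)$ and first angular function $-\alpha_F$. The origami map is $\Phi_F(s,v)=F(s,v)$ for $v\ge0$ and $\Phi_F(s,v)=\check F(s,v)$ for $v<0$. *)

(* Defs.v *)
From HB Require Import structures.
From mathcomp Require Import all_boot all_order all_algebra.
From mathcomp Require Import all_classical all_reals all_analysis.
Set Implicit Arguments. Unset Strict Implicit. Unset Printing Implicit Defensive.
Import Order.TTheory GRing.Theory Num.Theory.
Import numFieldNormedType.Exports.
Local Open Scope classical_set_scope.
Local Open Scope ring_scope.

Section Defs.
Variable R : realType.
Notation V := 'rV[R]_3.

(* Euclidean structure of R^3 (the library norm on matrices is the sup norm). *)
Definition dot (u w : V) : R := \sum_(i < 3) u 0 i * w 0 i.
Definition enorm (u : V) : R := Num.sqrt (dot u u).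
Definition cross (u w : V) : V :=
  \row_(i < 3) (if i == 0 :> nat then u 0 1 * w 0 2 - u 0 2 * w 0 1
               else if i == 1 :> nat then u 0 2 * w 0 0 - u 0 0 * w 0 2
               else u 0 0 * w 0 1 - u 0 1 * w 0 0).

Definition smooth_on {W : normedModType R} (U : set R) (f : R -> W) : Prop :=
  forall (n : nat) (s : R), U s -> derivable (iter n (@derive1 R W) f) s 1.

(* Frenet apparatus of an arc-length parametrized curve c. *)
Definition curvature (c : R -> V) (s : R) : R := enorm (derive1 (derive1 c) s).
Definition tangent (c : R -> V) (s : R) : V := derive1 c s.
Definition pnormal (c : R -> V) (s : R) : V := (curvature c s)^-1 *: derive1 (derive1 c) s.
Definition binormal (c : R -> V) (s : R) : V := cross (tangent c s) (pnormal c s).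
Definition torsion (c : R -> V) (s : R) : R :=
  dot (derive1 (pnormal c) s) (binormal c s).

(* Second angular function determined by the first one [alpha] through the
   developability condition cot beta = (alpha' + tau)/(kappa sin alpha),
   0 < beta < pi (cot (pi/2 - atan x) = x). *)
Definition beta_of (c : R -> V) (alpha : R -> R) (s : R) : R :=
  pi / 2 - atan ((derive1 alpha s + torsion c s) / (curvature c s * sin (alpha s))).

Definition ruling (c : R -> V) (alpha : R -> R) (s : R) : V :=
  cos (beta_of c alpha s) *: tangent c s
  + sin (beta_of c alpha s) *: (cos (alpha s) *: pnormal c s
                                + sin (alpha s) *: binormal c s).
Definition normal_form (c : R -> V) (alpha : R -> R) (s v : R) : V :=
  c s + v *: ruling c alpha s.

Definition dual_form (c : R -> V) (alpha : R -> R) : R -> R -> V :=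
  normal_form c (fun s => - alpha s).

Definition origami (c : R -> V) (alpha : R -> R) (s v : R) : V :=
  if 0 <= v then normal_form c alpha s v else dual_form c alpha s v.

(* Parameter domain J: R (standing for R/lZ) if closed, [-l/2,l/2] otherwise. *)
Definition Jset (closed : bool) (l : R) : set R :=
  if closed then setT else `[- (l / 2), l / 2]%classic.
Definition eqJ (closed : bool) (l : R) (s s' : R) : Prop :=
  if closed then exists k : int, s' = s + k%:~R * l else s = s'.
Definition Omega (closed : bool) (l eps : R) : set (R * R) :=
  [set p | Jset closed l p.1 /\ - eps < p.2 < eps].

Definition curve_data (closed : bool) (l : R) (c : R -> V) (alpha : R -> R)
  : Prop :=
  0 < l /\
  (if closed then
     (forall s, c (s + l) = c s /\ alpha (s + l) = alpha s) /\
     {in `[0, l[%classic &, injective c}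
   else {in `[- (l / 2), l / 2]%classic &, injective c}) /\
  exists delta : R, 0 < delta /\
   let U := if closed then setT
            else `]- (l / 2) - delta, l / 2 + delta[%classic in
   smooth_on U c /\ smooth_on U alpha /\
   (forall s, U s ->
      enorm (derive1 c s) = 1 /\ 0 < curvature c s /\
      0 < `|alpha s| < pi / 2).

Definition embedding_germ (closed : bool) (l : R) (F : R -> R -> V) : Prop :=
  exists eps0 : R, 0 < eps0 /\
   (forall p q, Omega closed l eps0 p -> Omega closed l eps0 q ->
      F p.1 p.2 = F q.1 q.2 -> eqJ closed l p.1 q.1 /\ p.2 = q.2) /\
   (forall p, Omega closed l eps0 p -> forall a b : R,
      a *: derive1 (fun s => F s p.2) p.1 + b *: derive1 (F p.1) p.2 = 0 ->
      a = 0 /\ b = 0).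

End Defs.

(* Main.v *)
Require Import Defs.
From HB Require Import structures.
From mathcomp Require Import all_boot all_order all_algebra.
From mathcomp Require Import all_classical all_reals all_analysis.
From mathcomp Require Import ring lra.
Import Order.TTheory GRing.Theory Num.Theory.
Import numFieldNormedType.Exports.
Local Open Scope classical_set_scope.
Local Open Scope ring_scope.
Set Implicit Arguments. Unset Strict Implicit. Unset Printing Implicit Defensive.

Section Basic.
Variable R : realType.
Notation V := 'rV[R]_3.

Lemma coord_le (u : V) i : `|u 0 i| <= `|u|.
Proof.
rewrite [X in _ <= X]/Num.Def.normr/= mx_normrE.
by apply: le_trans (le_bigmax _ _ (0, i)); rewrite /=.
Qed.

Lemma norm_le_coord (u : V) (B : R) : 0 <= B -> (forall i, `|u 0 i| <= B) -> `|u| <= B.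
Proof.
move=> B0 H; rewrite [X in X <= _]/Num.Def.normr/= mx_normrE.
apply: bigmax_le => //= -[a b] _ /=.
by rewrite (ord1 a); apply: H.
Qed.

Lemma comp_is_derive (f : R -> V) x i : derivable f x 1 ->
  is_derive x 1 (fun y => f y 0 i) (derive1 f x 0 i).
Proof.
move=> df.
have /derivable_mxP/(_ 0 i) di := df.
apply: DeriveDef => //.
by rewrite derive1E derive_mx // mxE.
Qed.

End Basic.


Section Lip.
Variable R : realType.
Notation V := 'rV[R]_3.

Lemma near_ball (t0 : R) (P : R -> Prop) :
  (\forall x \near t0, P x) -> exists2 r : R, 0 < r & forall x, `|x - t0| < r -> P x.
Proof.
move=> /nbhs_ballP [r r0 H]; exists r => // x hx; apply: H.
by rewrite /ball /= distrC.
Qed.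

Lemma cont_near (W : normedModType R) (g : R -> W) t0 e :
  {for t0, continuous g} -> 0 < e ->
  exists2 r : R, 0 < r & forall x, `|x - t0| < r -> `|g x - g t0| < e.
Proof.
move=> /cvgrPdist_lt H e0; have := H e e0.
move/near_ball => [r r0 Hr]; exists r => // x /Hr; by rewrite distrC.
Qed.

Lemma deriv_cont (W : normedModType R) (g : R -> W) t0 :
  derivable g t0 1 -> {for t0, continuous g}.
Proof. by move=> /derivable1_diffP /differentiable_continuous. Qed.

Definition lip (t0 : R) (W : normedModType R) (f : R -> W) :=
  exists2 r : R, 0 < r & exists L : R, 0 <= L /\
    forall s t, `|s - t0| < r -> `|t - t0| < r -> `|f s - f t| <= L * `|s - t|.

Lemma lip_cst t0 (W : normedModType R) (k : W) : lip t0 (fun _ => k).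
Proof.
exists 1 => //; exists 0; split => // s t _ _.
by rewrite subrr normr0 mul0r.
Qed.

Lemma lip_id t0 : lip t0 (fun x : R => x).
Proof. exists 1 => //; exists 1; split => // s t _ _; by rewrite mul1r. Qed.

Lemma lip_eq t0 (W : normedModType R) (f g : R -> W) :
  lip t0 f -> (exists2 r : R, 0 < r & forall x, `|x - t0| < r -> f x = g x) ->
  lip t0 g.
Proof.
move=> [r r0 [L [L0 H]]] [r' r'0 E].
exists (Num.min r r'); first by rewrite lt_min r0 r'0.
exists L; split => // s t; rewrite !lt_min => /andP[hs hs'] /andP[ht ht'].
by rewrite -E // -E // H.
Qed.

Lemma lipD t0 (W : normedModType R) (f g : R -> W) :
  lip t0 f -> lip t0 g -> lip t0 (fun x => f x + g x).
Proof.
move=> [r r0 [L [L0 H]]] [r' r'0 [L' [L'0 H']]].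
exists (Num.min r r'); first by rewrite lt_min r0 r'0.
exists (L + L'); split; first by rewrite addr_ge0.
move=> s t; rewrite !lt_min => /andP[hs hs'] /andP[ht ht'].
rewrite opprD addrACA (le_trans (ler_normD _ _)) // mulrDl.
by rewrite lerD // ?H // ?H'.
Qed.

Lemma lipN t0 (W : normedModType R) (f : R -> W) :
  lip t0 f -> lip t0 (fun x => - f x).
Proof.
move=> [r r0 [L [L0 H]]]; exists r => //; exists L; split => // s t hs ht.
by rewrite -opprD normrN H.
Qed.

Lemma lipB t0 (W : normedModType R) (f g : R -> W) :
  lip t0 f -> lip t0 g -> lip t0 (fun x => f x - g x).
Proof. by move=> hf hg; apply: lipD => //; apply: lipN. Qed.

Lemma lip_bounded t0 (W : normedModType R) (f : R -> W) :
  lip t0 f -> exists2 r : R, 0 < r & exists B : R, 0 <= B /\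
    forall s, `|s - t0| < r -> `|f s| <= B.
Proof.
move=> [r r0 [L [L0 H]]]; exists r => //; exists (`|f t0| + L * r); split.
  by rewrite addr_ge0 // mulr_ge0 // ltW.
move=> s hs; rewrite -[f s](subrK (f t0)) (le_trans (ler_normD _ _)) //.
rewrite addrC lerD2l (le_trans (H s t0 hs _)) //; first by rewrite subrr normr0.
by rewrite ler_wpM2l // ltW.
Qed.

Lemma lipZ t0 (W : normedModType R) (k : R -> R) (f : R -> W) :
  lip t0 k -> lip t0 f -> lip t0 (fun x => k x *: f x).
Proof.
move=> hk hf.
have [r1 r10 [B1 [B10 HB1]]] := lip_bounded hk.
have [r2 r20 [B2 [B20 HB2]]] := lip_bounded hf.
move: hk hf => [r r0 [L [L0 H]]] [r' r'0 [L' [L'0 H']]].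
exists (Num.min (Num.min r r') (Num.min r1 r2)).
  by rewrite !lt_min r0 r'0 r10 r20.
exists (B1 * L' + L * B2); split; first by rewrite addr_ge0 // mulr_ge0.
move=> s t; rewrite !lt_min => /andP[/andP[hs hs'] /andP[hs1 hs2]] /andP[/andP[ht ht'] /andP[ht1 ht2]].
have -> : k s *: f s - k t *: f t = k s *: (f s - f t) + (k s - k t) *: f t.
  by rewrite scalerBr scalerBl addrA subrK.
rewrite (le_trans (ler_normD _ _)) // !normrZ mulrDl.
rewrite lerD //.
  by rewrite -mulrA; apply: ler_pM (normr_ge0 _) (normr_ge0 _) (HB1 _ hs1) (H' _ _ hs' ht').
by rewrite mulrAC; apply: ler_pM (normr_ge0 _) (normr_ge0 _) (H _ _ hs ht) (HB2 _ ht2).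
Qed.

Lemma lipM t0 (k f : R -> R) :
  lip t0 k -> lip t0 f -> lip t0 (fun x => k x * f x).
Proof. exact: lipZ. Qed.

Lemma lip_near t0 (W : normedModType R) (f : R -> W) e :
  lip t0 f -> 0 < e -> exists2 r : R, 0 < r & forall x, `|x - t0| < r -> `|f x - f t0| <= e.
Proof.
move=> [r r0 [L [L0 H]]] e0.
exists (Num.min r (e / (L + 1))).
  by rewrite lt_min r0 divr_gt0 // ltr_wpDl.
move=> x; rewrite lt_min => /andP[hx hx'].
rewrite (le_trans (H x t0 hx _)) //; first by rewrite subrr normr0.
have L1 : 0 < L + 1 by rewrite ltr_wpDl.
rewrite (le_trans (ler_wpM2l L0 (ltW hx'))) //.
rewrite mulrCA ler_piMr ?ltW //.
by rewrite ltr_pdivrMr // mul1r ltrDl.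
Qed.


Lemma lipV t0 (f : R -> R) :
  lip t0 f -> f t0 != 0 -> lip t0 (fun x => (f x)^-1).
Proof.
move=> hf f0.
set m := `|f t0| / 2.
have m0 : 0 < m by rewrite divr_gt0 // normr_gt0.
have [r1 r10 H1] := lip_near hf m0.
move: hf => [r r0 [L [L0 H]]].
have lb s : `|s - t0| < r1 -> m <= `|f s|.
  move=> /H1 hs.
  have : `|f t0| <= `|f s| + `|f s - f t0|.
    have E : f t0 = f s - (f s - f t0) by rewrite opprB addrC subrK.
    by rewrite {1}E ler_normB.
  rewrite /m in hs *; lra.
exists (Num.min r r1); first by rewrite lt_min r0 r10.
exists (L / (m * m)); split; first by rewrite divr_ge0 // mulr_ge0 // ltW.
move=> s t; rewrite !lt_min => /andP[hs hs1] /andP[ht ht1].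
have fs0 : f s != 0 by rewrite -normr_gt0 (lt_le_trans m0) // lb.
have ft0 : f t != 0 by rewrite -normr_gt0 (lt_le_trans m0) // lb.
have -> : (f s)^-1 - (f t)^-1 = (f t - f s) * ((f s)^-1 * (f t)^-1).
  by field; apply/andP.
rewrite normrM distrC mulrAC.
apply: ler_pM (normr_ge0 _) (normr_ge0 _) (H _ _ hs ht) _.
rewrite normrM !normrV ?unitfE // invfM.
have ms : m <= `|f s| by apply: lb.
have mt : m <= `|f t| by apply: lb.
apply: ler_pM; rewrite ?invr_ge0 ?normr_ge0 //; rewrite lef_pV2 ?posrE ?normr_gt0 //.
Qed.

End Lip.

Section Lip2.
Variable R : realType.
Notation V := 'rV[R]_3.

Lemma lip_comp1 t0 (g f : R -> R) :
  (forall x y, `|g x - g y| <= `|x - y|) -> lip t0 f -> lip t0 (fun x => g (f x)).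
Proof.
move=> hg [r r0 [L [L0 H]]]; exists r => //; exists L; split => // s t hs ht.
exact: le_trans (hg _ _) (H _ _ hs ht).
Qed.

Lemma lip_sqrt t0 (f : R -> R) :
  lip t0 f -> 0 < f t0 -> lip t0 (fun x => Num.sqrt (f x)).
Proof.
move=> hf f0.
set m := f t0 / 2.
have m0 : 0 < m by rewrite divr_gt0.
have [r1 r10 H1] := lip_near hf m0.
move: hf => [r r0 [L [L0 H]]].
have lb s : `|s - t0| < r1 -> m <= f s.
  move=> /H1; rewrite /m ler_norml; lra.
exists (Num.min r r1); first by rewrite lt_min r0 r10.
have sm0 : 0 < Num.sqrt m by rewrite sqrtr_gt0.
exists (L / Num.sqrt m); split; first by rewrite divr_ge0 // ltW.
move=> s t; rewrite !lt_min => /andP[hs hs1] /andP[ht ht1].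
have ms := lb _ hs1; have mt := lb _ ht1.
have ss : Num.sqrt m <= Num.sqrt (f s) by rewrite ler_wsqrtr.
have st0 : 0 <= Num.sqrt (f t) by rewrite sqrtr_ge0.
have sp : 0 < Num.sqrt (f s) + Num.sqrt (f t) by rewrite ltr_wpDr // (lt_le_trans sm0).
have -> : Num.sqrt (f s) - Num.sqrt (f t) =
    (f s - f t) / (Num.sqrt (f s) + Num.sqrt (f t)).
  apply: (mulIf (lt0r_neq0 sp)); rewrite divfK ?lt0r_neq0 //.
  rewrite mulrBl !mulrDr -!expr2 !sqr_sqrtr ?(le_trans (ltW m0)) //.
  by rewrite [Num.sqrt (f t) * _]mulrC; ring.
rewrite normrM mulrAC; apply: ler_pM (normr_ge0 _) (normr_ge0 _) (H _ _ hs ht) _.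
rewrite normrV ?unitfE ?lt0r_neq0 // gtr0_norm // lef_pV2 ?posrE //.
by rewrite (le_trans ss) // lerDl.
Qed.

Lemma lip_coord t0 (f : R -> V) i : lip t0 f -> lip t0 (fun x => f x 0 i).
Proof.
move=> [r r0 [L [L0 H]]]; exists r => //; exists L; split => // s t hs ht.
apply: le_trans (H _ _ hs ht).
have -> : f s 0 i - f t 0 i = (f s - f t) 0 i by rewrite !mxE.
exact: coord_le.
Qed.

Lemma lip_row t0 (f : R -> V) :
  (forall i, lip t0 (fun x => f x 0 i)) -> lip t0 f.
Proof.
move=> H.
have [r1 r10 [L1 [L10 H1]]] := H 0.
have [r2 r20 [L2 [L20 H2]]] := H 1.
have [r3 r30 [L3 [L30 H3]]] := H 2%:R.
exists (Num.min r1 (Num.min r2 r3)); first by rewrite !lt_min r10 r20 r30.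
exists (L1 + L2 + L3); split; first by rewrite !addr_ge0.
move=> s t; rewrite !lt_min => /and3P[hs1 hs2 hs3] /and3P[ht1 ht2 ht3].
apply: norm_le_coord; first by rewrite mulr_ge0 // !addr_ge0.
move=> i; rewrite !mxE.
have d0 : 0 <= `|s - t| by [].
have [e1 e2 e3] : [/\ L1 * `|s - t| <= (L1 + L2 + L3) * `|s - t|,
   L2 * `|s - t| <= (L1 + L2 + L3) * `|s - t| &
   L3 * `|s - t| <= (L1 + L2 + L3) * `|s - t|].
  split; apply: ler_wpM2r => //; lra.
case: i => -[|[|[|//]]] Hi.
- apply: le_trans e1; have := H1 _ _ hs1 ht1.
  by congr (`|_ - _| <= _); congr (f _ 0 _); apply: val_inj.
- apply: le_trans e2; have := H2 _ _ hs2 ht2.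
  by congr (`|_ - _| <= _); congr (f _ 0 _); apply: val_inj.
- apply: le_trans e3; have := H3 _ _ hs3 ht3.
  by congr (`|_ - _| <= _); congr (f _ 0 _); apply: val_inj.
Qed.

Lemma lip_sum t0 n (h : 'I_n -> R -> R) :
  (forall i, lip t0 (h i)) -> lip t0 (fun x => \sum_(i < n) h i x).
Proof.
elim: n h => [|n IH] h H.
  apply: lip_eq (lip_cst t0 (0 : R)) _; exists 1 => // x _; by rewrite big_ord0.
apply: lip_eq (lipD (IH (fun i => h (widen_ord (leqnSn n) i)) _) (H ord_max)) _.
  by move=> i; apply: H.
by exists 1 => // x _; rewrite big_ord_recr.
Qed.

Lemma lip_deriv t0 (f : R -> R) (B : R) :
  0 <= B ->
  (exists2 r : R, 0 < r & forall x, `|x - t0| < r ->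
      derivable f x 1 /\ `|derive1 f x| <= B) ->
  lip t0 f.
Proof.
move=> B0 [r r0 H]; exists r => //; exists B; split => //.
have aux a b : a <= b -> `|a - t0| < r -> `|b - t0| < r -> `|f b - f a| <= B * (b - a).
  move=> ab ha hb.
  have inb x : a <= x -> x <= b -> `|x - t0| < r.
    move: ha hb; rewrite !ltr_norml; lra.
  have D1 : forall x, x \in `]a, b[ -> is_derive x 1 f (derive1 f x).
    move=> x; rewrite in_itv /= => /andP[x1 x2].
    have [dx _] := H _ (inb _ (ltW x1) (ltW x2)).
    by apply: DeriveDef => //; rewrite derive1E.
  have C1 : {within `[a, b], continuous f}.
    apply: derivable_within_continuous => x; rewrite in_itv /= => /andP[x1 x2].
    exact: (H _ (inb _ x1 x2)).1.
  have [c cab ->] := MVT_segment ab D1 C1.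
  rewrite normrM [`|b - a|]ger0_norm ?subr_ge0 //; apply: ler_wpM2r; first by rewrite subr_ge0.
  move: cab; rewrite in_itv /= => /andP[c1 c2]; exact: (H _ (inb _ c1 c2)).2.
move=> s t hs ht; have [st|ts] := leP s t.
  have := aux _ _ st hs ht.
  by rewrite [`|s - t|]distrC [`|f s - _|]distrC (ger0_norm (_ : 0 <= t - s)) // subr_ge0.
have := aux _ _ (ltW ts) ht hs.
by rewrite (ger0_norm (_ : 0 <= s - t)) // subr_ge0 ltW.
Qed.

Lemma lip_derivV t0 (f : R -> V) :
  (exists2 r : R, 0 < r & forall x, `|x - t0| < r -> derivable f x 1) ->
  derivable (derive1 f) t0 1 -> lip t0 f.
Proof.
move=> [r r0 H] d2.
have [r1 r10 H1] := cont_near (deriv_cont d2) ltr01.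
apply: lip_row => i.
apply: (@lip_deriv _ _ (`|derive1 f t0| + 1)); first by rewrite addr_ge0.
exists (Num.min r r1); first by rewrite lt_min r0 r10.
move=> x; rewrite lt_min => /andP[hx hx1].
have di := comp_is_derive i (H _ hx).
split; first by case: di.
rewrite derive1E derive_val (le_trans (coord_le _ _)) //.
have := H1 _ hx1.
have : `|derive1 f x| <= `|derive1 f t0| + `|derive1 f x - derive1 f t0|.
  have E : derive1 f x = derive1 f t0 + (derive1 f x - derive1 f t0) by rewrite addrC subrK.
  by rewrite {1}E ler_normD.
move=> a b; apply: le_trans a _; rewrite lerD2l; exact: ltW.
Qed.

Lemma one_lip (g dg : R -> R) :
  (forall x : R, is_derive x (1 : R) g (dg x)) -> (forall x, `|dg x| <= 1) ->
  forall x y, `|g x - g y| <= `|x - y|.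
Proof.
move=> D B.
have aux a b : a <= b -> `|g b - g a| <= b - a.
  move=> ab.
  have C1 : {within `[a, b], continuous g}.
    apply: derivable_within_continuous => x _; by case: (D x).
  have [c _ ->] := MVT_segment ab (fun x _ => D x) C1.
  rewrite normrM [`|b - a|]ger0_norm ?subr_ge0 //.
  by rewrite -[X in _ <= X]mul1r ler_wpM2r ?subr_ge0.
move=> x y; have [xy|yx] := leP x y.
  have := aux _ _ xy.
  by rewrite [`|x - y|]distrC [`|g x - _|]distrC (ger0_norm (_ : 0 <= y - x)) // subr_ge0.
have := aux _ _ (ltW yx).
by rewrite (ger0_norm (_ : 0 <= x - y)) // subr_ge0 ltW.
Qed.

Lemma sin_lip (x y : R) : `|sin x - sin y| <= `|x - y|.
Proof.
apply: (one_lip (dg := cos)) => // z.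
by rewrite ler_norml cos_geN1 cos_le1.
Qed.

Lemma cos_lip (x y : R) : `|cos x - cos y| <= `|x - y|.
Proof.
apply: (one_lip (dg := fun z => - sin z)) => // z.
by rewrite normrN ler_norml sin_geN1 sin_le1.
Qed.

Lemma atan_lip (x y : R) : `|atan x - atan y| <= `|x - y|.
Proof.
apply: (one_lip (dg := fun z => (1 + z ^+ 2)^-1)) => // z.
have h : 1 <= 1 + z ^+ 2 by rewrite lerDl sqr_ge0.
rewrite ger0_norm ?invr_ge0 ?(le_trans ler01) // invf_le1 //.
exact: lt_le_trans ltr01 h.
Qed.

End Lip2.

Section Vec.
Variable R : realType.
Notation V := 'rV[R]_3.

Lemma sum3 (F : 'I_3 -> R) : \sum_(i < 3) F i = F 0 + F 1 + F 2.
Proof.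
rewrite !big_ord_recr big_ord0 /= add0r.
by congr (F _ + F _ + F _); apply: val_inj.
Qed.

Lemma ord3P (i : 'I_3) : i = 0 \/ i = 1 \/ i = 2.
Proof.
case: i => -[|[|[|//]]] Hi; [left|right; left|right; right]; by apply: val_inj.
Qed.

Lemma dotE (u w : V) : dot u w = u 0 0 * w 0 0 + u 0 1 * w 0 1 + u 0 2 * w 0 2.
Proof. by rewrite /dot sum3. Qed.

Lemma cross0 (u w : V) : cross u w 0 0 = u 0 1 * w 0 2 - u 0 2 * w 0 1.
Proof. by rewrite mxE. Qed.
Lemma cross1 (u w : V) : cross u w 0 1 = u 0 2 * w 0 0 - u 0 0 * w 0 2.
Proof. by rewrite mxE. Qed.
Lemma cross2 (u w : V) : cross u w 0 2 = u 0 0 * w 0 1 - u 0 1 * w 0 0.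
Proof. by rewrite mxE. Qed.

Lemma row3P (u w : V) : u 0 0 = w 0 0 -> u 0 1 = w 0 1 -> u 0 2 = w 0 2 -> u = w.
Proof.
move=> h0 h1 h2; apply/rowP => i.
by case: (ord3P i) => [->|[->|->]].
Qed.

Definition crossE := (cross0, cross1, cross2).

Lemma dot_bound (u w : V) : `|dot u w| <= 3 * (`|u| * `|w|).
Proof.
rewrite /dot (le_trans (ler_norm_sum _ _ _)) //.
have -> : 3 * (`|u| * `|w|) = \sum_(i < 3) (`|u| * `|w|).
  by rewrite sumr_const card_ord mulr_natl.
apply: ler_sum => i _; rewrite normrM.
by apply: ler_pM; rewrite ?normr_ge0 ?coord_le.
Qed.

Lemma coordD (u w : V) i : (u + w) 0 i = u 0 i + w 0 i. Proof. by rewrite mxE. Qed.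
Lemma coordN (u : V) i : (- u) 0 i = - u 0 i. Proof. by rewrite mxE. Qed.
Lemma coordB (u w : V) i : (u - w) 0 i = u 0 i - w 0 i. Proof. by rewrite !mxE. Qed.
Lemma coordZ (k : R) (u : V) i : (k *: u) 0 i = k * u 0 i. Proof. by rewrite mxE. Qed.
Lemma coord0 i : (0 : V) 0 i = 0. Proof. by rewrite mxE. Qed.

Definition coordE := (coordD, coordN, coordZ, coord0).

Lemma lip_dot t0 (f g : R -> V) : lip t0 f -> lip t0 g -> lip t0 (fun x => dot (f x) (g x)).
Proof.
move=> hf hg.
have h := lip_sum (h := fun i x => f x 0 i * g x 0 i) (fun i => lipM (lip_coord i hf) (lip_coord i hg)).
apply: lip_eq h _; by exists 1.
Qed.

Lemma lip_cross t0 (f g : R -> V) : lip t0 f -> lip t0 g -> lip t0 (fun x => cross (f x) (g x)).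
Proof.
move=> hf hg; apply: lip_row => i.
have c i' : lip t0 (fun x => f x 0 i') by apply: lip_coord.
have d i' : lip t0 (fun x => g x 0 i') by apply: lip_coord.
case: (ord3P i) => [->|].
- apply: lip_eq (lipB (lipM (c 1) (d 2)) (lipM (c 2) (d 1))) _.
  by exists 1 => // x _; rewrite crossE.
case => ->.
- apply: lip_eq (lipB (lipM (c 2) (d 0)) (lipM (c 0) (d 2))) _.
  by exists 1 => // x _; rewrite crossE.
- apply: lip_eq (lipB (lipM (c 0) (d 1)) (lipM (c 1) (d 0))) _.
  by exists 1 => // x _; rewrite crossE.
Qed.

End Vec.

Section Local.
Variable R : realType.
Notation V := 'rV[R]_3.

Lemma dotBr (a x y : V) : dot a (x - y) = dot a x - dot a y.
Proof. rewrite !dotE !coordB; ring. Qed.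

Lemma dot_is_derive (a : V) (c : R -> V) x : derivable c x 1 ->
  is_derive x (1 : R) (fun y => dot a (c y)) (dot a (derive1 c x)).
Proof.
move=> dc.
have E : (fun y => dot a (c y)) =
   (fun y => a 0 0 *: c y 0 0 + a 0 1 *: c y 0 1 + a 0 2 *: c y 0 2).
  by apply/funext => y; rewrite dotE.
rewrite E dotE.
have h0 := comp_is_derive 0 dc; have h1 := comp_is_derive 1 dc; have h2 := comp_is_derive 2 dc.
by apply: is_deriveD.
Qed.


Lemma mvt_ball (g dg : R -> R) (t0 r s t : R) :
  (forall x, `|x - t0| < r -> is_derive x (1 : R) g (dg x)) ->
  `|s - t0| < r -> `|t - t0| < r ->
  exists th, `|th - t0| < r /\ g s - g t = dg th * (s - t).
Proof.
move=> D.
have aux a b : a <= b -> `|a - t0| < r -> `|b - t0| < r ->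
    exists th, `|th - t0| < r /\ g b - g a = dg th * (b - a).
  move=> ab ha hb.
  have inb x : a <= x -> x <= b -> `|x - t0| < r.
    move: ha hb; rewrite !ltr_norml; lra.
  have D1 : forall x, x \in `]a, b[ -> is_derive x 1 g (dg x).
    move=> x; rewrite in_itv /= => /andP[x1 x2]; exact: D (inb _ (ltW x1) (ltW x2)).
  have C1 : {within `[a, b], continuous g}.
    apply: derivable_within_continuous => x; rewrite in_itv /= => /andP[x1 x2].
    by case: (D _ (inb _ x1 x2)).
  have [c cab ->] := MVT_segment ab D1 C1.
  exists c; split => //; move: cab; rewrite in_itv /= => /andP[c1 c2]; exact: inb.
move=> hs ht; have [st|ts] := leP s t.
  have [th [h1 h2]] := aux _ _ st hs ht.
  by exists th; split => //; rewrite -opprB h2 -mulrN opprB.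
have [th [h1 h2]] := aux _ _ (ltW ts) ht hs.
by exists th.
Qed.

Lemma key_ineq (D z a b Rm E1 E2 e : R) :
  z * D = a * E1 + b * E2 + Rm -> `|E1| <= e -> `|E2| <= e ->
  `|D| * `|z| <= e * `|a| + e * `|b| + `|Rm|.
Proof.
move=> h h1 h2.
rewrite mulrC -normrM h (le_trans (ler_normD _ _)) // lerD2r.
rewrite (le_trans (ler_normD _ _)) // !normrM.
by rewrite lerD // mulrC ler_wpM2r.
Qed.

End Local.

Section Local2.
Variable R : realType.
Notation V := 'rV[R]_3.

Lemma dot_lin1 (a X Y Z W : V) (v w : R) :
  X + v *: Z = Y + w *: W -> dot a X - dot a Y = w * dot a W - v * dot a Z.
Proof. move/(congr1 (dot a)); rewrite !dotE !coordE => h; lra. Qed.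

Lemma dot_lin2 (a X Y Z W : V) (v w : R) :
  X + v *: Z = Y + w *: W -> dot a X - dot a Y = (w - v) * dot a W + v * dot a (W - Z).
Proof. move/(congr1 (dot a)); rewrite !dotE !coordE ?coordB => h; lra. Qed.

Lemma lin_aux (D E z A B : R) : (D + E) * z = A - B -> z * D = z * - E + A + - B.
Proof. move=> h; lra. Qed.

Lemma lin_aux3 (D E z v X A : R) : E * z = A - v * X -> v * D = z * - E + A + v * (D - X).
Proof. move=> h; lra. Qed.

Lemma lin_aux4 (D E z v X A Y : R) : E * z = A * Y - v * X -> A * D = z * E + v * X + A * (D - Y).
Proof. move=> h; lra. Qed.

Lemma lin_aux5 (D E z A Y B : R) : (D + E) * z = A * Y + B -> z * D = z * - E + A * Y + B.
Proof. move=> h; lra. Qed.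

Lemma lin_aux6 (D E z A Y B : R) : E * z = A * Y + B -> A * D = z * E + A * (D - Y) + - B.
Proof. move=> h; lra. Qed.

Lemma sum3_0 (a b c : R) : 0 <= a -> 0 <= b -> 0 <= c -> a + b + c = 0 -> b = 0 /\ c = 0.
Proof. move=> *; split; lra. Qed.

Lemma sum2_0 (a b : R) : 0 <= a -> 0 <= b -> a + b = 0 -> a = 0 /\ b = 0.
Proof. move=> *; split; lra. Qed.

Lemma fin3 (P e z1 z2 z3 q1 q2 q3 : R) : 0 < P -> 8 * e = P ->
  0 <= z1 -> 0 <= z2 -> 0 <= z3 ->
  P * z1 <= e * z1 + e * z3 + q1 -> q1 <= e * z2 ->
  P * z2 <= e * z1 + e * z3 + q2 -> q2 <= e * z2 ->
  P * z3 <= e * z1 + e * z2 + q3 -> q3 <= e * z3 -> z1 + z2 + z3 = 0.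
Proof. move=> *; nra. Qed.

Lemma fin2 (P e z1 z2 q1 q3 : R) : 0 < P -> 8 * e = P ->
  0 <= z1 -> 0 <= z2 ->
  P * z1 <= e * z1 + e * z2 + q1 -> q1 <= e * z1 ->
  P * z2 <= e * z1 + e * z2 + q3 -> q3 <= e * z1 -> z1 + z2 = 0.
Proof. move=> *; nra. Qed.

Lemma local_lemma (c xi eta : R -> V) (t0 r0 : R) :
  0 < r0 ->
  (forall x, `|x - t0| < r0 -> derivable c x 1) ->
  {for t0, continuous (derive1 c)} ->
  {for t0, continuous xi} ->
  lip t0 eta ->
  dot (derive1 c t0) (cross (xi t0) (eta t0)) != 0 ->
  exists2 r : R, 0 < r & forall s t v w, `|s - t0| < r -> `|t - t0| < r ->
     (c s + v *: xi s = c t + w *: eta t -> v = 0 /\ w = 0) /\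
     (`|v| < r -> c s + v *: eta s = c t + w *: eta t -> s = t /\ v = w).
Proof.
move=> r00 dc cc cxi leta D0.
set e0 := derive1 c t0; set x0 := xi t0; set y0 := eta t0.
set D := dot e0 (cross x0 y0).
set a1 := cross x0 y0; set a2 := cross y0 e0; set a3 := cross e0 x0.
have I11 : dot a1 e0 = D by rewrite /D /a1 !dotE !crossE; ring.
have I12 : dot a1 x0 = 0 by rewrite /a1 !dotE !crossE; ring.
have I13 : dot a1 y0 = 0 by rewrite /a1 !dotE !crossE; ring.
have I21 : dot a2 e0 = 0 by rewrite /a2 !dotE !crossE; ring.
have I22 : dot a2 x0 = D by rewrite /D /a2 !dotE !crossE; ring.
have I23 : dot a2 y0 = 0 by rewrite /a2 !dotE !crossE; ring.
have I31 : dot a3 e0 = 0 by rewrite /a3 !dotE !crossE; ring.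
have I32 : dot a3 x0 = 0 by rewrite /a3 !dotE !crossE; ring.
have I33 : dot a3 y0 = D by rewrite /D /a3 !dotE !crossE; ring.
set K := `|a1| + `|a2| + `|a3| + 1.
have n1 := normr_ge0 a1; have n2 := normr_ge0 a2; have n3 := normr_ge0 a3.
have K0 : 0 < K by rewrite /K; lra.
have Ka1 : `|a1| <= K by rewrite /K; lra.
have Ka2 : `|a2| <= K by rewrite /K; lra.
have Ka3 : `|a3| <= K by rewrite /K; lra.
set P := `|D|.
have P0 : 0 < P by rewrite normr_gt0.
set eps := P / 8.
have eps0 : 0 < eps by rewrite divr_gt0.
set rho := eps / (3 * K).
have K30 : 0 < 3 * K by rewrite mulr_gt0.
have rho0 : 0 < rho by rewrite divr_gt0.
have bnd (a z : V) : `|a| <= K -> `|z| <= rho -> `|dot a z| <= eps.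
  move=> ha hz; rewrite (le_trans (dot_bound _ _)) //.
  have -> : eps = 3 * (K * rho) by rewrite /rho mulrA mulrC divfK // gt_eqF.
  by rewrite ler_wpM2l // ler_pM.
have [r1 r10 H1] := cont_near cc rho0.
have [r2 r20 H2] := cont_near cxi rho0.
have [r3 r30 H3] := lip_near leta rho0.
have [rL rL0 [L [L0 HL]]] := leta.
set r4 := eps / (3 * K * L + 1).
have KL0 : 0 <= 3 * K * L by rewrite mulr_ge0 // ltW.
have r40 : 0 < r4 by rewrite divr_gt0 // ltr_wpDl.
have r4L : r4 * (3 * K * L) <= eps.
  rewrite /r4 mulrAC ler_pdivrMr ?ltr_wpDl // ler_wpM2l ?ltW //; lra.
set r := Num.min r0 (Num.min (Num.min r1 r2) (Num.min (Num.min r3 rL) r4)).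
have r0' : 0 < r by rewrite !lt_min r00 r10 r20 r30 rL0 r40.
exists r => //.
have inr x : `|x - t0| < r ->
    [/\ `|x - t0| < r0, `|x - t0| < r1, `|x - t0| < r2, `|x - t0| < r3 &
        `|x - t0| < rL /\ `|x - t0| < r4].
  by rewrite !lt_min => /andP[a0 /andP[/andP[a1' a2'] /andP[/andP[a3' a4] a5]]].
have in0 x : `|x - t0| < r -> `|x - t0| < r0 by case/inr.
have in1 x : `|x - t0| < r -> `|x - t0| < r1 by case/inr.
have hr4 : r <= r4 by rewrite /r !ge_min lexx !orbT.
move=> s t v w hs ht.
have [s0 s1 s2 s3 [sL s4]] := inr _ hs.
have [t0' t1 t2 t3 [tL t4]] := inr _ ht.
have mvt (a : V) : `|a| <= K -> exists E, `|E| <= eps /\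
    dot a (c s) - dot a (c t) = (dot a e0 + E) * (s - t).
  move=> ha.
  have [th [hth ->]] := mvt_ball (g := fun y => dot a (c y))
     (dg := fun y => dot a (derive1 c y)) (t0 := t0) (r := r)
     (fun x hx => dot_is_derive a (dc _ (in0 _ hx))) hs ht.
  exists (dot a (derive1 c th - e0)); split.
    apply: bnd => //; apply: ltW; exact: H1 (in1 _ hth).
  by rewrite dotBr (addrC (dot a e0)) subrK.
have Exi (a : V) : `|a| <= K -> `|dot a (xi s) - dot a x0| <= eps.
  move=> ha; rewrite -dotBr; apply: bnd => //; apply: ltW.
  exact: H2.
have Eeta (a : V) : `|a| <= K -> `|dot a (eta t) - dot a y0| <= eps.
  move=> ha; rewrite -dotBr; apply: bnd => //.
  exact: H3.
have Eeta2 (a : V) : `|a| <= K -> `|v| < r -> `|v * dot a (eta t - eta s)| <= eps * `|s - t|.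
  move=> ha hv.
  have h1 : `|dot a (eta t - eta s)| <= 3 * (K * (L * `|t - s|)).
    rewrite (le_trans (dot_bound _ _)) // ler_wpM2l // ler_pM //; exact: HL.
  rewrite normrM; apply: le_trans (ler_pM (normr_ge0 _) (normr_ge0 _) (ltW hv) h1) _.
  have h2 : r * (3 * K * L) <= eps := le_trans (ler_wpM2r KL0 hr4) r4L.
  have := ler_wpM2r (normr_ge0 (t - s)) h2.
  by rewrite (distrC s t) !mulrA.
have P8 : 8 * eps = P by rewrite /eps mulrC divfK // pnatr_eq0.
split.
- move=> Eq.
  have Ea a := dot_lin1 a Eq.
  have [E1 [hE1 q1]] := mvt a1 Ka1.
  have [E2 [hE2 q2]] := mvt a2 Ka2.
  have [E3 [hE3 q3]] := mvt a3 Ka3.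
  have X1 := Exi a1 Ka1; have X2 := Exi a2 Ka2; have X3 := Exi a3 Ka3.
  have Y1 := Eeta a1 Ka1; have Y2 := Eeta a2 Ka2; have Y3 := Eeta a3 Ka3.
  rewrite I12 subr0 in X1; rewrite I22 in X2; rewrite I32 subr0 in X3.
  rewrite I13 subr0 in Y1; rewrite I23 subr0 in Y2; rewrite I33 in Y3.
  rewrite I11 Ea in q1; rewrite I21 add0r Ea in q2; rewrite I31 add0r Ea in q3.
  have k1 := key_ineq (lin_aux (esym q1)) (ltac:(by rewrite normrN) : `|- E1| <= eps) Y1.
  have k2 := key_ineq (lin_aux3 D (esym q2)) (ltac:(by rewrite normrN) : `|- E2| <= eps) Y2.
  have k3 := key_ineq (lin_aux4 D (esym q3)) hE3 X3.
  have m1 : `|- (v * dot a1 (xi s))| <= eps * `|v| by rewrite normrN normrM mulrC ler_wpM2r.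
  have m2 : `|v * (D - dot a2 (xi s))| <= eps * `|v| by rewrite normrM distrC mulrC ler_wpM2r.
  have m3 : `|w * (D - dot a3 (eta t))| <= eps * `|w| by rewrite normrM distrC mulrC ler_wpM2r.
  have X0 := fin3 P0 P8 (normr_ge0 (s - t)) (normr_ge0 v) (normr_ge0 w) k1 m1 k2 m2 k3 m3.
  have [Z2 Z3] := sum3_0 (normr_ge0 (s - t)) (normr_ge0 v) (normr_ge0 w) X0.
  by split; apply/normr0_eq0.
- move=> hv Eq.
  have Ea a := dot_lin2 a Eq.
  have [E1 [hE1 q1]] := mvt a1 Ka1.
  have [E3 [hE3 q3]] := mvt a3 Ka3.
  have Y1 := Eeta a1 Ka1; have Y3 := Eeta a3 Ka3.
  rewrite I13 subr0 in Y1; rewrite I33 distrC in Y3.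
  have R1 := Eeta2 a1 Ka1 hv; have R3 := Eeta2 a3 Ka3 hv.
  rewrite I11 Ea in q1; rewrite I31 add0r Ea in q3.
  have k1 := key_ineq (lin_aux5 (esym q1)) (ltac:(by rewrite normrN) : `|- E1| <= eps) Y1.
  have k3 := key_ineq (lin_aux6 D (esym q3)) hE3 Y3.
  rewrite normrN in k3.
  have X0 := fin2 P0 P8 (normr_ge0 (s - t)) (normr_ge0 (w - v)) k1 R1 k3 R3.
  have [st wv] := sum2_0 (normr_ge0 (s - t)) (normr_ge0 (w - v)) X0.
  by move/normr0_eq0/eqP: st; move/normr0_eq0/eqP: wv; rewrite !subr_eq0 => /eqP -> /eqP ->.
Qed.

End Local2.

Section Frenet.
Variable R : realType.
Notation V := 'rV[R]_3.

Lemma lip_cont t0 (W : normedModType R) (f : R -> W) :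
  lip t0 f -> {for t0, continuous f}.
Proof.
move=> hf; apply/cvgrPdist_lt => e e0.
have e20 : 0 < e / 2 by rewrite divr_gt0.
have [r r0 H] := lip_near hf e20.
apply/nbhs_ballP; exists r => // y; rewrite /ball /= => hy.
rewrite distrC (le_lt_trans (H _ _)) //; first by rewrite distrC.
by rewrite ltr_pdivrMr // ltr_pMr // ltr1n.
Qed.

Lemma scaleRE (a b : R) : a *: b = a * b. Proof. by []. Qed.

Lemma dot_ge0 (u : V) : 0 <= dot u u.
Proof. by rewrite dotE !addr_ge0 // -expr2 sqr_ge0. Qed.

Lemma dot_self_is_derive (f : R -> V) x : derivable f x 1 ->
  is_derive x (1 : R) (fun y => dot (f y) (f y)) (2 * dot (f x) (derive1 f x)).
Proof.
move=> df.
have E : (fun y => dot (f y) (f y)) =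
   (fun y => f y 0 0 * f y 0 0 + f y 0 1 * f y 0 1 + f y 0 2 * f y 0 2).
  by apply/funext => y; rewrite dotE.
rewrite E.
have h0 := comp_is_derive 0 df; have h1 := comp_is_derive 1 df; have h2 := comp_is_derive 2 df.
eapply trigger_derive; first by apply: is_deriveD.
rewrite dotE /= !scaleRE; ring.
Qed.

Lemma dot_is_derive2 (f : R -> V) x : derivable f x 1 -> derivable (fun y => dot (f y) (f y)) x 1.
Proof. by move=> /dot_self_is_derive []. Qed.

End Frenet.

Section Frenet2.
Variable R : realType.
Notation V := 'rV[R]_3.
Implicit Types c : R -> V.

Notation c2 c := (derive1 (derive1 c)).
Notation c3 c := (derive1 (derive1 (derive1 c))).

Lemma curv_derivable c x : derivable (c2 c) x 1 -> 0 < curvature c x ->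
  derivable (curvature c) x 1.
Proof.
move=> d2 k0.
set q := fun y => dot (c2 c y) (c2 c y).
have [dq _] := dot_self_is_derive d2.
have q0 : 0 < q x by rewrite -sqrtr_gt0.
have h := is_derive1_comp (is_derive1_sqrt q0) (DeriveDef dq erefl).
by case: h.
Qed.

Lemma pnormal_deriv c x j : derivable (c2 c) x 1 -> 0 < curvature c x ->
  derivable (pnormal c) x 1 /\
  derive1 (pnormal c) x 0 j =
    (curvature c x)^-1 * c3 c x 0 j + c2 c x 0 j * derive1 (fun y => (curvature c y)^-1) x.
Proof.
move=> d2 k0.
have dk := curv_derivable d2 k0.
have dki : derivable (fun y => (curvature c y)^-1) x 1 by apply: derivableV => //; rewrite gt_eqF.
have E i j' : (fun y => pnormal c y i j') =
    ((fun y => (curvature c y)^-1) * (fun y => c2 c y i j')).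
  by apply/funext => y; rewrite /pnormal mxE.
have dc i j' : derivable (fun y => c2 c y i j') x 1.
  by move/derivable_mxP: d2; apply.
have dn : derivable (pnormal c) x 1.
  apply/derivable_mxP => i j'; rewrite E; exact: (derivableM dki (dc i j')).
split => //.
rewrite derive1E (derive_mx dn) mxE E (deriveM dki (dc 0 j)).
have [_ D1] := comp_is_derive j d2.
by rewrite D1 -derive1E !scaleRE.
Qed.

Lemma torsion_alg (np c2v c3v e : V) (k d : R) :
  (forall j, np 0 j = k * c3v 0 j + c2v 0 j * d) ->
  dot np (cross e (k *: c2v)) = k * dot c3v (cross e (k *: c2v)).
Proof. move=> H; rewrite !dotE !H !crossE !coordZ; ring. Qed.

Lemma torsionE c x : derivable (c2 c) x 1 -> 0 < curvature c x ->
  torsion c x = (curvature c x)^-1 * dot (c3 c x) (binormal c x).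
Proof.
move=> d2 k0.
exact: (torsion_alg (derive1 c x) (fun j => (pnormal_deriv j d2 k0).2)).
Qed.

End Frenet2.

Section Frenet3.
Variable R : realType.
Notation V := 'rV[R]_3.
Implicit Types c : R -> V.

Lemma unit_dot (u : V) : enorm u = 1 -> dot u u = 1.
Proof.
rewrite /enorm => h; have := sqr_sqrtr (dot_ge0 u).
by rewrite h expr1n => <-.
Qed.

Lemma dotZr (a : R) (u w : V) : dot u (a *: w) = a * dot u w.
Proof. rewrite !dotE !coordZ; ring. Qed.

Lemma dotZZ (a : R) (u : V) : dot (a *: u) (a *: u) = a ^+ 2 * dot u u.
Proof. rewrite !dotE !coordZ; ring. Qed.

Lemma pnormal_unit c x : 0 < curvature c x -> dot (pnormal c x) (pnormal c x) = 1.
Proof.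
rewrite /pnormal dotZZ /curvature /enorm => k0.
have := sqr_sqrtr (dot_ge0 (derive1 (derive1 c) x)).
set q := dot _ _; set k := Num.sqrt q => hq.
rewrite -hq -exprMn mulVf ?expr1n //; exact: lt0r_neq0.
Qed.

Lemma tn_orth c x r : 0 < r -> (forall y, `|y - x| < r -> enorm (derive1 c y) = 1) ->
  derivable (derive1 c) x 1 -> dot (derive1 c x) (derive1 (derive1 c) x) = 0.
Proof.
move=> r0 H d1.
have [_ D] := dot_self_is_derive d1.
have N : \forall y \near x, (fun y => dot (derive1 c y) (derive1 c y)) y = cst (1 : R) y.
  apply/nbhs_ballP; exists r => // y; rewrite /ball /= => hy.
  by rewrite /cst unit_dot // H // distrC.
have := @near_eq_derive R R R (fun y => dot (derive1 c y) (derive1 c y)) (cst 1) x 1 N.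
rewrite D derive_cst => /eqP.
by rewrite mulf_eq0 pnatr_eq0 /= => /eqP.
Qed.

Lemma tn_orth2 c x r : 0 < r -> (forall y, `|y - x| < r -> enorm (derive1 c y) = 1) ->
  derivable (derive1 c) x 1 -> dot (tangent c x) (pnormal c x) = 0.
Proof.
move=> r0 H d1; have := tn_orth r0 H d1.
by rewrite /tangent /pnormal dotZr => ->; rewrite mulr0.
Qed.

Lemma coord_unit (u : V) i : dot u u = 1 -> `|u 0 i| <= 1.
Proof.
rewrite dotE => h.
have a0 := sqr_ge0 (u 0 0); have a1 := sqr_ge0 (u 0 1); have a2 := sqr_ge0 (u 0 2).
rewrite !expr2 in a0 a1 a2.
have s : u 0 i * u 0 i <= 1 by case: (ord3P i) => [->|[->|->]]; lra.
rewrite ler_norml; apply/andP; split; nra.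
Qed.

Lemma nb_mul (p q P Q : R) : `|p| <= P -> `|q| <= Q -> `|p * q| <= P * Q.
Proof. by move=> hp hq; rewrite normrM ler_pM. Qed.

Lemma nb2 (p q r s : R) : `|p| <= 1 -> `|q| <= 1 -> `|r| <= 1 -> `|s| <= 1 ->
  `|p * q - r * s| <= 2.
Proof.
move=> hp hq hr hs; rewrite (le_trans (ler_normB _ _)) //.
have := nb_mul hp hq; have := nb_mul hr hs; rewrite mul1r; lra.
Qed.

Lemma nb4 (A B C D x y z : R) : `|A| <= 1 -> `|B| <= 1 -> `|C| <= 1 -> `|D| <= 1 ->
  `|x| <= 1 -> `|y| <= 1 -> `|z| <= 2 -> `|A * x + B * (C * y + D * z)| <= 4.
Proof.
move=> hA hB hC hD hx hy hz.
have h1 := nb_mul hA hx; have h2 := nb_mul hC hy; have h3 := nb_mul hD hz.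
have h4 : `|C * y + D * z| <= 3.
  rewrite (le_trans (ler_normD _ _)) //; move: h2 h3; rewrite !mul1r; lra.
have h5 := nb_mul hB h4.
rewrite (le_trans (ler_normD _ _)) //; move: h1 h5; rewrite !mul1r; lra.
Qed.

Lemma ruling_coord_bound (e n b : V) (cb sb ca sa : R) i :
  (forall j, `|e 0 j| <= 1) -> (forall j, `|n 0 j| <= 1) -> (forall j, `|b 0 j| <= 2) ->
  `|cb| <= 1 -> `|sb| <= 1 -> `|ca| <= 1 -> `|sa| <= 1 ->
  `|(cb *: e + sb *: (ca *: n + sa *: b)) 0 i| <= 4.
Proof.
move=> he hn hb h1 h2 h3 h4; rewrite !coordE; exact: nb4.
Qed.

Lemma cos_abs (y : R) : `|cos y| <= 1.
Proof. by rewrite ler_norml cos_geN1 cos_le1. Qed.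
Lemma sin_abs (y : R) : `|sin y| <= 1.
Proof. by rewrite ler_norml sin_geN1 sin_le1. Qed.

Lemma ruling_bound c (a : R -> R) x :
  dot (tangent c x) (tangent c x) = 1 -> dot (pnormal c x) (pnormal c x) = 1 ->
  `|ruling c a x| <= 4.
Proof.
move=> he hn; apply: norm_le_coord => // i.
have ce j := coord_unit j he; have cn j := coord_unit j hn.
have cb j : `|binormal c x 0 j| <= 2.
  by rewrite /binormal; case: (ord3P j) => [->|[->|->]]; rewrite crossE nb2.
exact: (ruling_coord_bound i ce cn cb (cos_abs _) (sin_abs _) (cos_abs _) (sin_abs _)).
Qed.

Lemma det_alg (e n : V) (cb sb cb' sb' ca sa : R) :
  dot e (cross (cb *: e + sb *: (ca *: n + sa *: cross e n))
               (cb' *: e + sb' *: (ca *: n + (- sa) *: cross e n))) =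
  - 2 * sb * sb' * sa * ca * (dot e e * dot n n - dot e n ^+ 2).
Proof. rewrite !dotE !crossE !coordE !crossE; ring. Qed.

Lemma sin_beta_gt0 (X : R) : 0 < sin (pi / 2 - atan X).
Proof.
rewrite sinB sin_pihalf cos_pihalf mul1r mul0r subr0 cos_atan invr_gt0 sqrtr_gt0.
by rewrite ltr_pwDl // sqr_ge0.
Qed.

End Frenet3.

Section Frenet4.
Variable R : realType.
Notation V := 'rV[R]_3.
Implicit Types c : R -> V.

Lemma lip_ruling c (a : R -> R) t0 r0 :
  0 < r0 ->
  (forall n x, `|x - t0| < r0 -> derivable (iter n (@derive1 R V) c) x 1) ->
  (forall x, `|x - t0| < r0 -> 0 < curvature c x) ->
  lip t0 a -> lip t0 (derive1 a) -> sin (a t0) != 0 ->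
  lip t0 (ruling c a).
Proof.
move=> r00 Hc Hk ha ha' hs.
have t00 : `|t0 - t0| < r0 by rewrite subrr normr0.
have lip1 : lip t0 (derive1 c).
  apply: lip_derivV; [by exists r0 => // x hx; exact: (Hc 1%N x hx)| exact: (Hc 2%N t0 t00)].
have lip2 : lip t0 (derive1 (derive1 c)).
  apply: lip_derivV; [by exists r0 => // x hx; exact: (Hc 2%N x hx)| exact: (Hc 3%N t0 t00)].
have lip3 : lip t0 (derive1 (derive1 (derive1 c))).
  apply: lip_derivV; [by exists r0 => // x hx; exact: (Hc 3%N x hx)| exact: (Hc 4%N t0 t00)].
have lipq := lip_dot lip2 lip2.
have k0 := Hk _ t00.
have q0 : 0 < dot (derive1 (derive1 c) t0) (derive1 (derive1 c) t0) by rewrite -sqrtr_gt0.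
have lipk : lip t0 (curvature c) := lip_sqrt lipq q0.
have lipki := lipV lipk (lt0r_neq0 k0).
have lipn : lip t0 (pnormal c) := lipZ lipki lip2.
have lipb : lip t0 (binormal c) := lip_cross lip1 lipn.
have lipt : lip t0 (torsion c).
  apply: lip_eq (lipM lipki (lip_dot lip3 lipb)) _.
  exists r0 => [//|x hx].
  by rewrite (torsionE (Hc 2%N x hx) (Hk _ hx)).
have lipsa := lip_comp1 (@sin_lip R) ha; have lipca := lip_comp1 (@cos_lip R) ha.
have nz : curvature c t0 * sin (a t0) != 0 by rewrite mulf_neq0 // lt0r_neq0.
have lipX := lipM (lipD ha' lipt) (lipV (lipM lipk lipsa) nz).
have lipbeta := lipB (lip_cst t0 (pi / 2 : R)) (lip_comp1 (@atan_lip R) lipX).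
have := lipD (lipZ (lip_comp1 (@cos_lip R) lipbeta) lip1)
  (lipZ (lip_comp1 (@sin_lip R) lipbeta) (lipD (lipZ lipca lipn) (lipZ lipsa lipb))).
move=> h; apply: lip_eq h _; by exists 1.
Qed.

End Frenet4.

Section Core.
Variable R : realType.
Notation V := 'rV[R]_3.

Lemma nbhs_box (p : R * R) (r1 r2 : R) : 0 < r1 -> 0 < r2 ->
  nbhs p [set q : R * R | `|q.1 - p.1| < r1 /\ `|q.2 - p.2| < r2].
Proof.
move=> h1 h2; exists (ball p.1 r1, ball p.2 r2); first by split; apply: nbhsx_ballx.
by move=> [x y] [/= hx hy]; rewrite /ball /= in hx hy; rewrite distrC hx distrC hy.
Qed.

Lemma core (a b M : R) (c : R -> V) (F G : R -> R -> V) :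
  (forall t0, a <= t0 <= b -> exists2 r : R, 0 < r & forall s t v w,
     `|s - t0| < r -> `|t - t0| < r ->
     (F s v = G t w -> v = 0 /\ w = 0) /\ (`|v| < r -> G s v = G t w -> s = t /\ v = w)) ->
  (forall t0 t1, a <= t0 <= b -> a <= t1 <= b -> c t0 = c t1 ->
     forall t w, G t w = G (t - (t1 - t0)) w /\ c t = c (t - (t1 - t0))) ->
  (forall s v, a <= s <= b -> `|F s v - c s| <= M * `|v| /\ `|G s v - c s| <= M * `|v|) ->
  (forall s, a <= s <= b -> {for s, continuous c}) ->
  exists2 eps : R, 0 < eps & forall s t v w, a <= s <= b -> a <= t <= b ->
     `|v| < eps -> `|w| < eps ->
     (F s v = G t w -> v = 0 /\ w = 0) /\ (G s v = G t w -> c s = c t /\ v = w).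
Proof.
move=> Hloc Hsh Hbd Hc.
apply: contrapT => Hn.
pose good s t v w := (F s v = G t w -> v = 0 /\ w = 0) /\ (G s v = G t w -> c s = c t /\ v = w).
pose B (e : R) := [set p : R * R | (a <= p.1 <= b) /\ (a <= p.2 <= b) /\
   exists v w, `|v| < e /\ `|w| < e /\ ~ good p.1 p.2 v w].
have Bne e : 0 < e -> B e !=set0.
  move=> e0; apply: contrapT => hne; apply: Hn; exists e => // s t v w hs ht hv hw.
  apply: contrapT => hg; apply: hne; exists (s, t); split => //; split => //.
  by exists v, w.
have Bmono e e' : e <= e' -> B e `<=` B e'.
  move=> ee [s t] [hs [ht [v [w [hv [hw hg]]]]]]; split => //; split => //.
  exists v, w; split; [exact: lt_le_trans ee|split => //; exact: lt_le_trans ee].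
pose FF := filter_from [set e : R | 0 < e] B.
have FFf : Filter FF.
  apply: filter_from_filter; first by exists 1; rewrite /= ltr01.
  move=> i j i0 j0; rewrite /= in i0 j0; exists (Num.min i j); first by rewrite /= lt_min i0 j0.
  move=> q Bq; split; apply: (Bmono _ _ _ q Bq); rewrite ge_min lexx ?orbT //.
have FFp : ProperFilter FF by apply: filter_from_proper => i /= i0; exact: Bne.
have cK : compact (`[a, b] `*` `[a, b]) by apply: compact_setX; exact: segment_compact.
have FK : FF (`[a, b] `*` `[a, b]).
  exists 1 => //= -[s t] [/= hs [ht _]]; split; rewrite /= in_itv /=; by [].
have [[s0 t0] [[/= Ks Kt] clp]] := cK FF FFp FK.
rewrite /= in_itv /= in Ks; rewrite /= in_itv /= in Kt.
have getbad e r1 r2 : 0 < e -> 0 < r1 -> 0 < r2 -> exists s t v w,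
    [/\ a <= s <= b, a <= t <= b, `|s - s0| < r1, `|t - t0| < r2 &
     [/\ `|v| < e, `|w| < e & ~ good s t v w]].
  move=> e0 h1 h2.
  have [[s t] [[/= hs [ht [v [w [hv [hw hg]]]]]] [/= hs1 ht1]]] :=
    clp (B e) _ (ex_intro2 _ _ e e0 (@subset_refl _ (B e))) (nbhs_box (s0, t0) h1 h2).
  by exists s, t, v, w.
have badeq s t v w : ~ good s t v w -> F s v = G t w \/ G s v = G t w.
  move=> hg; apply: contrapT => hn; apply: hg; split => h; exfalso; apply: hn; by [left|right].
have cst : c s0 = c t0.
  apply: contrapT => hne.
  set d := `|c s0 - c t0|.
  have d0 : 0 < d by rewrite normr_gt0 subr_eq0; apply/eqP.
  have d30 : 0 < d / 3 by rewrite divr_gt0.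
  have [r1 r10 H1] := cont_near (Hc _ Ks) d30.
  have [r2 r20 H2] := cont_near (Hc _ Kt) d30.
  set e := d / (6 * (`|M| + 1)).
  have M1 : 0 < `|M| + 1 by rewrite ltr_wpDl.
  have e0 : 0 < e by rewrite divr_gt0 // mulr_gt0.
  have [s [t [v [w [hs ht hs1 ht1 [hv hw hg]]]]]] := getbad e r1 r2 e0 r10 r20.
  have bnd : `|c s - c t| <= `|M| * e + `|M| * e.
    have hMv : M * `|v| <= `|M| * e.
      by rewrite (le_trans (ler_norm _)) // normrM normr_id ler_wpM2l // ltW.
    have hMw : M * `|w| <= `|M| * e.
      by rewrite (le_trans (ler_norm _)) // normrM normr_id ler_wpM2l // ltW.
    have [[Fb Gb] [Fb' Gb']] := (Hbd s v hs, Hbd t w ht).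
    have [Gs _] := Hbd s v hs.
    case: (badeq _ _ _ _ hg) => E.
    - have -> : c s - c t = - (F s v - c s) + (G t w - c t) by rewrite E opprB addrA subrK.
      rewrite (le_trans (ler_normD _ _)) // normrN; apply: lerD.
        exact: le_trans Fb hMv.
      exact: le_trans Gb' hMw.
    - have [_ Gs'] := Hbd s v hs.
      have -> : c s - c t = - (G s v - c s) + (G t w - c t) by rewrite E opprB addrA subrK.
      rewrite (le_trans (ler_normD _ _)) // normrN; apply: lerD.
        exact: le_trans Gs' hMv.
      exact: le_trans Gb' hMw.
  have : d <= `|c s0 - c s| + `|c s - c t| + `|c t - c t0|.
    rewrite /d; have -> : c s0 - c t0 = (c s0 - c s) + (c s - c t) + (c t - c t0).
      by rewrite !addrA subrK subrK.
    by rewrite (le_trans (ler_normD _ _)) // lerD2r ler_normD.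
  have h1 : `|c s0 - c s| < d / 3 by rewrite distrC; exact: H1.
  have h2 : `|c t - c t0| < d / 3 by exact: H2.
  have h3 : `|M| * e + `|M| * e < d / 3.
    rewrite /e -mulrDl -mulr2n -mulr_natl mulrA.
    rewrite ltr_pdivrMr ?mulr_gt0 //.
    have hM := normr_ge0 M.
    nra.
  lra.
have [r r0 Hr] := Hloc _ Ks.
have [s [t [v [w [hs ht hs1 ht1 [hv hw hg]]]]]] := getbad r r r r0 r0 r0.
apply: hg.
have [Gsh csh] := Hsh s0 t0 Ks Kt cst t w.
have ht' : `|t - (t0 - s0) - s0| < r.
  by have -> : t - (t0 - s0) - s0 = t - t0 by ring.
have [L1 L2] := Hr s (t - (t0 - s0)) v w hs1 ht'.
split.
- by rewrite Gsh; exact: L1.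
- rewrite Gsh => E; have [-> ->] := L2 hv E; by rewrite csh.
Qed.

End Core.

Section Assemble.
Variable R : realType.
Notation V := 'rV[R]_3.

Lemma lip_smooth1 (f : R -> R) t0 r0 : 0 < r0 ->
  (forall x, `|x - t0| < r0 -> derivable f x 1) -> derivable (derive1 f) t0 1 -> lip t0 f.
Proof.
move=> r00 H d2.
have [r1 r10 H1] := cont_near (deriv_cont d2) ltr01.
apply: (@lip_deriv R t0 f (`|derive1 f t0| + 1)); first by rewrite addr_ge0.
exists (Num.min r0 r1); first by rewrite lt_min r00 r10.
move=> x; rewrite lt_min => /andP[hx hx1]; split; first exact: H.
have := H1 _ hx1.
have : `|derive1 f x| <= `|derive1 f t0| + `|derive1 f x - derive1 f t0|.
  have E : derive1 f x = derive1 f t0 + (derive1 f x - derive1 f t0) by rewrite addrC subrK.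
  by rewrite {1}E ler_normD.
move=> a b; apply: le_trans a _; rewrite lerD2l; exact: ltW.
Qed.

Lemma sin_alpha_neq0 (x : R) : 0 < `|x| < pi / 2 -> sin x != 0.
Proof.
move=> /andP[h1 h2]; have [xle|xgt] := leP x 0.
- rewrite (ler0_norm xle) in h1 h2.
  have : 0 < sin (- x) by apply: sin_gt0_pihalf; rewrite h1 h2.
  by rewrite sinN oppr_gt0 => /ltr0_neq0.
- rewrite (gtr0_norm xgt) in h2.
  by apply: lt0r_neq0; apply: sin_gt0_pihalf; rewrite xgt h2.
Qed.

Lemma cos_alpha_gt0 (x : R) : `|x| < pi / 2 -> 0 < cos x.
Proof. by move=> h; apply: cos_gt0_pihalf; rewrite -ltr_norml. Qed.

Lemma local_at (c : R -> V) (alpha : R -> R) (t0 r0 : R) :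
  0 < r0 ->
  (forall n x, `|x - t0| < r0 -> derivable (iter n (@derive1 R V) c) x 1) ->
  (forall n x, `|x - t0| < r0 -> derivable (iter n (@derive1 R R) alpha) x 1) ->
  (forall x, `|x - t0| < r0 ->
     enorm (derive1 c x) = 1 /\ 0 < curvature c x /\ 0 < `|alpha x| < pi / 2) ->
  exists2 r : R, 0 < r & forall s t v w, `|s - t0| < r -> `|t - t0| < r ->
     (normal_form c alpha s v = dual_form c alpha t w -> v = 0 /\ w = 0) /\
     (`|v| < r -> dual_form c alpha s v = dual_form c alpha t w -> s = t /\ v = w).
Proof.
move=> r00 Hc Ha Hg.
have t00 : `|t0 - t0| < r0 by rewrite subrr normr0.
have [e1 [k0 ha0]] := Hg _ t00.
have Hk x (hx : `|x - t0| < r0) : 0 < curvature c x := (Hg x hx).2.1.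
have la : lip t0 alpha := lip_smooth1 r00 (fun x hx => Ha 0%N x hx) (Ha 1%N t0 t00).
have la' : lip t0 (derive1 alpha) :=
  lip_smooth1 r00 (fun x hx => Ha 1%N x hx) (Ha 2%N t0 t00).
have lna : lip t0 (fun s => - alpha s) := lipN la.
have lna' : lip t0 (derive1 (fun s => - alpha s)).
  apply: lip_eq (lipN la') _; exists r0 => // x hx.
  by symmetry; exact: (derive1N (Ha 0%N x hx)).
have sa : sin (alpha t0) != 0 := sin_alpha_neq0 ha0.
have sna : sin ((fun s => - alpha s) t0) != 0 by rewrite sinN oppr_eq0.
have lxi := lip_ruling r00 Hc Hk la la' sa.
have leta := lip_ruling r00 Hc Hk lna lna' sna.
have en := tn_orth2 r00 (fun y hy => (Hg y hy).1) (Hc 1%N t0 t00).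
have nn := pnormal_unit k0.
have ee := unit_dot e1.
have det : dot (derive1 c t0)
    (cross (ruling c alpha t0) (ruling c (fun s => - alpha s) t0)) != 0.
  rewrite /ruling cosN sinN /binormal.
  rewrite /tangent in en *.
  rewrite det_alg ee nn en expr0n /= subr0 mulr1.
  have cb1 : sin (beta_of c alpha t0) != 0 by apply: lt0r_neq0; exact: sin_beta_gt0.
  have cb2 : sin (beta_of c (fun s => - alpha s) t0) != 0.
    by apply: lt0r_neq0; exact: sin_beta_gt0.
  have ca : cos (alpha t0) != 0.
    by apply: lt0r_neq0; apply: cos_alpha_gt0; case/andP: ha0.
  by rewrite !mulf_neq0 // oppr_eq0 pnatr_eq0.
exact: (local_lemma r00 (fun x hx => Hc 0%N x hx) (deriv_cont (Hc 1%N t0 t00))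
  (lip_cont lxi) leta det).
Qed.

End Assemble.

Section Per.
Variable R : realType.
Notation V := 'rV[R]_3.

Lemma nf_bound (c : R -> V) (a : R -> R) s v :
  enorm (derive1 c s) = 1 -> 0 < curvature c s ->
  `|normal_form c a s v - c s| <= 4 * `|v|.
Proof.
move=> e1 k0; rewrite /normal_form addrC addKr normrZ mulrC.
apply: ler_wpM2r => //; apply: ruling_bound; [exact: unit_dot|exact: pnormal_unit].
Qed.

Definition per (l : R) (W : normedModType R) (f : R -> W) := forall x, f (x + l) = f x.

Lemma per_derive l (W : normedModType R) (f : R -> W) : per l f -> per l (derive1 f).
Proof.
move=> h x; rewrite /derive1.
have -> : (fun h0 => h0^-1 *: (f (h0 + (x + l)) - f (x + l))) =
          (fun h0 => h0^-1 *: (f (h0 + x) - f x)).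
  by apply/funext => h0; rewrite addrA !h.
by [].
Qed.

Lemma per_int l (W : normedModType R) (f : R -> W) : per l f ->
  forall (k : int) x, f (x + k%:~R * l) = f x.
Proof.
move=> h.
have hn (n : nat) x : f (x + n%:R * l) = f x.
  elim: n x => [|n IH] x; first by rewrite mul0r addr0.
  by rewrite -natr1 mulrDl mul1r addrA h IH.
move=> [n|n] x; first exact: hn.
have -> : (Negz n)%:~R = - (n.+1)%:R :> R by rewrite NegzE mulrNz.
have := hn n.+1 (x - n.+1%:R * l); rewrite subrK => ->.
by rewrite mulNr.
Qed.

Lemma per_ruling l (c : R -> V) (a : R -> R) : per l c -> per l a -> per l (ruling c a).
Proof.
move=> pc pa x.
have p1 := per_derive pc; have p2 := per_derive p1.
have pk y : curvature c (y + l) = curvature c y by rewrite /curvature p2.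
have pn y : pnormal c (y + l) = pnormal c y by rewrite /pnormal pk p2.
have pb y : binormal c (y + l) = binormal c y by rewrite /binormal /tangent p1 pn.
have pdn := per_derive pn.
have pt y : torsion c (y + l) = torsion c y by rewrite /torsion pdn pb.
have pa' := per_derive pa.
have pbeta y : beta_of c a (y + l) = beta_of c a y by rewrite /beta_of pa' pt pk pa.
by rewrite /ruling pbeta /tangent p1 pn pb pa.
Qed.

Lemma per_nf l (c : R -> V) (a : R -> R) v : per l c -> per l a ->
  per l (fun s => normal_form c a s v).
Proof. by move=> pc pa x; rewrite /normal_form pc (per_ruling pc pa). Qed.

Lemma reduce (l x : R) : 0 < l -> exists k : int, 0 <= x - k%:~R * l < l.
Proof.
move=> l0; exists (Num.floor (x / l)).
have h1 := Num.Theory.floor_le (x / l).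
have h2 := Num.Theory.floorD1_gt (x / l).
rewrite intrD in h2.
rewrite ler_pdivlMr // in h1; rewrite ltr_pdivrMr // mulrDl mul1r in h2.
apply/andP; split; [by rewrite subr_ge0| by rewrite ltrBlDr addrC].
Qed.

Lemma in_co (l x : R) : 0 <= x < l -> x \in `[0, l[%classic.
Proof. by move=> h; rewrite inE /= in_itv /=. Qed.

Lemma per_eq l (c : R -> V) : 0 < l -> per l c -> {in `[0, l[%classic &, injective c} ->
  forall x y, c x = c y -> exists k : int, y = x + k%:~R * l.
Proof.
move=> l0 pc inj x y cxy.
have [kx hx] := reduce x l0; have [ky hy] := reduce y l0.
have ex : c (x - kx%:~R * l) = c x.
  by rewrite -{2}[x](subrK (kx%:~R * l)) per_int.
have ey : c (y - ky%:~R * l) = c y.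
  by rewrite -{2}[y](subrK (ky%:~R * l)) per_int.
have := inj _ _ (in_co hx) (in_co hy); rewrite ex ey => /(_ cxy) E.
exists (ky - kx); rewrite intrB mulrBl.
have -> : y = y - ky%:~R * l + ky%:~R * l by rewrite subrK.
rewrite -E; ring.
Qed.

End Per.

Section Finish.
Variable R : realType.
Notation V := 'rV[R]_3.

Lemma finish (J : set R) (EQ : R -> R -> Prop) (c : R -> V) (F G : R -> R -> V) (e0 e1 : R) :
  0 < e0 -> 0 < e1 ->
  (forall s, F s 0 = c s) -> (forall s, G s 0 = c s) ->
  (forall s t v w, J s -> J t -> `|v| < e0 -> `|w| < e0 -> F s v = F t w -> EQ s t /\ v = w) ->
  (forall s t v w, J s -> J t -> `|v| < e1 -> `|w| < e1 ->
     (F s v = G t w -> v = 0 /\ w = 0) /\ (G s v = G t w -> EQ s t /\ v = w)) ->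
  exists eps0 : R, 0 < eps0 /\ forall eps : R, 0 < eps < eps0 ->
    ((fun p => F p.1 p.2) @` [set p | J p.1 /\ - eps < p.2 < eps])
      `&` ((fun p => G p.1 p.2) @` [set p | J p.1 /\ - eps < p.2 < eps]) = c @` J
    /\ (forall p q, [set p | J p.1 /\ - eps < p.2 < eps] p ->
          [set p | J p.1 /\ - eps < p.2 < eps] q ->
          (if 0 <= p.2 then F p.1 p.2 else G p.1 p.2) =
          (if 0 <= q.2 then F q.1 q.2 else G q.1 q.2) -> EQ p.1 q.1 /\ p.2 = q.2).
Proof.
move=> e00 e10 F0 G0 Emb Cor.
exists (Num.min e0 e1); split; first by rewrite lt_min e00 e10.
move=> eps /andP[eps0]; rewrite lt_min => /andP[he0 he1].
have nb v : - eps < v < eps -> `|v| < e0 /\ `|v| < e1.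
  by rewrite -ltr_norml => h; split; apply: lt_trans h _.
split.
- apply/seteqP; split => x.
  + move=> [[[s v] /= [Js hv] <-] [[t w] /= [Jt hw] E]].
    have [hv0 hv1] := nb _ hv; have [hw0 hw1] := nb _ hw.
    have [-> _] := (Cor s t v w Js Jt hv1 hw1).1 (esym E).
    by exists s => //; rewrite F0.
  + move=> [s Js <-]; split; exists (s, 0) => //=; rewrite ?F0 ?G0 //;
      by split => //; rewrite oppr_lt0 eps0.
- move=> [s v] [t w] /= [Js hv] [Jt hw].
  have [hv0 hv1] := nb _ hv; have [hw0 hw1] := nb _ hw.
  case: ifP => v0; case: ifP => w0 E.
  + exact: Emb.
  + have [_ w00] := (Cor s t v w Js Jt hv1 hw1).1 E.
    by move: w0; rewrite w00 lexx.
  + have [_ v00] := (Cor t s w v Jt Js hw1 hv1).1 (esym E).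
    by move: v0; rewrite v00 lexx.
  + exact: (Cor s t v w Js Jt hv1 hw1).2.
Qed.

End Finish.

Section Main.
Variable R : realType.
Notation V := 'rV[R]_3.

Lemma nf0 (c : R -> V) (a : R -> R) s : normal_form c a s 0 = c s.
Proof. by rewrite /normal_form scale0r addr0. Qed.

Lemma main_closed (l : R) (c : R -> V) (alpha : R -> R) :
  curve_data true l c alpha ->
  embedding_germ true l (normal_form c alpha) ->
  exists eps0 : R, 0 < eps0 /\
    forall eps : R, 0 < eps < eps0 ->
      ((fun p => normal_form c alpha p.1 p.2) @` Omega true l eps)
        `&` ((fun p => dual_form c alpha p.1 p.2) @` Omega true l eps)
        = c @` Jset true l
      /\ (forall p q, Omega true l eps p -> Omega true l eps q ->
            origami c alpha p.1 p.2 = origami c alpha q.1 q.2 ->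
            eqJ true l p.1 q.1 /\ p.2 = q.2).
Proof.
move=> [l0 [[HP inj] [delta [d0 [Sc [Sa Sg]]]]]] [e0 [e00 [Einj _]]].
have pc : per l c := fun x => (HP x).1.
have pa : per l alpha := fun x => (HP x).2.
have pna : per l (fun s => - alpha s) by move=> x; rewrite pa.
have pF v : per l (fun s => normal_form c alpha s v) := per_nf v pc pa.
have pG v : per l (fun s => dual_form c alpha s v) := per_nf v pc pna.
have Hloc : forall t0, 0 <= t0 <= l -> exists2 r : R, 0 < r & forall s t v w,
     `|s - t0| < r -> `|t - t0| < r ->
     (normal_form c alpha s v = dual_form c alpha t w -> v = 0 /\ w = 0) /\
     (`|v| < r -> dual_form c alpha s v = dual_form c alpha t w -> s = t /\ v = w).
  move=> t0 _; apply: (@local_at R c alpha t0 1) => //.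
  - by move=> n x _; exact: (Sc n x I).
  - by move=> n x _; exact: (Sa n x I).
  - by move=> x _; exact: (Sg x I).
have Hsh : forall t0 t1, 0 <= t0 <= l -> 0 <= t1 <= l -> c t0 = c t1 ->
     forall t w, dual_form c alpha t w = dual_form c alpha (t - (t1 - t0)) w /\
                 c t = c (t - (t1 - t0)).
  move=> t0 t1 _ _ E t w.
  have [k ->] := per_eq l0 pc inj E.
  rewrite [t0 + _]addrC addrK.
  split.
  - by have := per_int (pG w) k (t - k%:~R * l); rewrite /= subrK.
  - by have := per_int pc k (t - k%:~R * l); rewrite /= subrK.
have Hbd : forall s v, 0 <= s <= l ->
     `|normal_form c alpha s v - c s| <= 4 * `|v| /\
     `|dual_form c alpha s v - c s| <= 4 * `|v|.
  move=> s v _; have [e1 [k0 _]] := Sg s I.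
  by split; apply: nf_bound.
have Hcont : forall s, 0 <= s <= l -> {for s, continuous c}.
  by move=> s _; exact: deriv_cont (Sc 0%N s I).
have [e1 e10 Cor] := core Hloc Hsh Hbd Hcont.
rewrite /Omega /origami.
apply: (@finish R (Jset true l) (eqJ true l) c (normal_form c alpha) (dual_form c alpha) e0 e1 e00 e10).
- by move=> s; exact: nf0.
- by move=> s; exact: nf0.
- move=> s t v w Js Jt hv hw E.
  have hv' : - e0 < v < e0 by rewrite -ltr_norml.
  have hw' : - e0 < w < e0 by rewrite -ltr_norml.
  exact: (Einj (s, v) (t, w) (conj Js hv') (conj Jt hw') E).
move=> s t v w _ _ hv hw.
have [ks hs] := reduce s l0; have [kt ht] := reduce t l0.
set s' := s - ks%:~R * l; set t' := t - kt%:~R * l.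
have hs' : 0 <= s' <= l by case/andP: hs => -> /ltW ->.
have ht' : 0 <= t' <= l by case/andP: ht => -> /ltW ->.
have Fs u : normal_form c alpha s u = normal_form c alpha s' u.
  by have := per_int (pF u) ks s'; rewrite /= /s' subrK.
have Gs u : dual_form c alpha s u = dual_form c alpha s' u.
  by have := per_int (pG u) ks s'; rewrite /= /s' subrK.
have Gt u : dual_form c alpha t u = dual_form c alpha t' u.
  by have := per_int (pG u) kt t'; rewrite /= /t' subrK.
have cs : c s = c s' by have := per_int pc ks s'; rewrite /= /s' subrK.
have ct : c t = c t' by have := per_int pc kt t'; rewrite /= /t' subrK.
have [C1 C2] := Cor s' t' v w hs' ht' hv hw.
split.
- by rewrite Fs Gt; exact: C1.
- rewrite Gs Gt => E; have [E1 E2] := C2 E; split; last exact: E2.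
  have cst : c s = c t by rewrite cs ct E1.
  have [k hk] := per_eq l0 pc inj cst.
  by exists k.
Qed.

Lemma main_open (l : R) (c : R -> V) (alpha : R -> R) :
  curve_data false l c alpha ->
  embedding_germ false l (normal_form c alpha) ->
  exists eps0 : R, 0 < eps0 /\
    forall eps : R, 0 < eps < eps0 ->
      ((fun p => normal_form c alpha p.1 p.2) @` Omega false l eps)
        `&` ((fun p => dual_form c alpha p.1 p.2) @` Omega false l eps)
        = c @` Jset false l
      /\ (forall p q, Omega false l eps p -> Omega false l eps q ->
            origami c alpha p.1 p.2 = origami c alpha q.1 q.2 ->
            eqJ false l p.1 q.1 /\ p.2 = q.2).
Proof.
move=> [l0 [inj [delta [d0 [Sc [Sa Sg]]]]]] [e0 [e00 [Einj _]]].
have inJ x : Jset false l x <-> - (l / 2) <= x <= l / 2.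
  by rewrite /Jset /= in_itv.
have inU x : - (l / 2) - delta < x < l / 2 + delta ->
    `]- (l / 2) - delta, l / 2 + delta[%classic x.
  by rewrite /= in_itv.
have Hloc : forall t0, - (l / 2) <= t0 <= l / 2 -> exists2 r : R, 0 < r & forall s t v w,
     `|s - t0| < r -> `|t - t0| < r ->
     (normal_form c alpha s v = dual_form c alpha t w -> v = 0 /\ w = 0) /\
     (`|v| < r -> dual_form c alpha s v = dual_form c alpha t w -> s = t /\ v = w).
  move=> t0 ht0.
  have U x : `|x - t0| < delta -> `]- (l / 2) - delta, l / 2 + delta[%classic x.
    move=> hx; apply: inU; move: hx ht0; rewrite ltr_norml; lra.
  apply: (@local_at R c alpha t0 delta) => //.
  - by move=> n x hx; exact: (Sc n x (U _ hx)).
  - by move=> n x hx; exact: (Sa n x (U _ hx)).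
  - by move=> x hx; exact: (Sg x (U _ hx)).
have UJ x : - (l / 2) <= x <= l / 2 -> `]- (l / 2) - delta, l / 2 + delta[%classic x.
  move=> hx; apply: inU; move: hx; lra.
have Hsh : forall t0 t1, - (l / 2) <= t0 <= l / 2 -> - (l / 2) <= t1 <= l / 2 ->
     c t0 = c t1 ->
     forall t w, dual_form c alpha t w = dual_form c alpha (t - (t1 - t0)) w /\
                 c t = c (t - (t1 - t0)).
  move=> t0 t1 h0 h1 E t w.
  have -> : t0 = t1.
    apply: inj => //; rewrite inE; by apply/inJ.
  by rewrite subrr subr0.
have Hbd : forall s v, - (l / 2) <= s <= l / 2 ->
     `|normal_form c alpha s v - c s| <= 4 * `|v| /\
     `|dual_form c alpha s v - c s| <= 4 * `|v|.
  move=> s v hs; have [e1 [k0 _]] := Sg s (UJ _ hs).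
  by split; apply: nf_bound.
have Hcont : forall s, - (l / 2) <= s <= l / 2 -> {for s, continuous c}.
  by move=> s hs; exact: deriv_cont (Sc 0%N s (UJ _ hs)).
have [e1 e10 Cor] := core Hloc Hsh Hbd Hcont.
rewrite /Omega /origami.
apply: (@finish R (Jset false l) (eqJ false l) c (normal_form c alpha) (dual_form c alpha) e0 e1 e00 e10).
- by move=> s; exact: nf0.
- by move=> s; exact: nf0.
- move=> s t v w Js Jt hv hw E.
  have hv' : - e0 < v < e0 by rewrite -ltr_norml.
  have hw' : - e0 < w < e0 by rewrite -ltr_norml.
  exact: (Einj (s, v) (t, w) (conj Js hv') (conj Jt hw') E).
move=> s t v w Js Jt hv hw.
have [C1 C2] := Cor s t v w (proj1 (inJ s) Js) (proj1 (inJ t) Jt) hv hw.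
split; first exact: C1.
move=> E; have [E1 E2] := C2 E; split; last exact: E2.
change (s = t).
have Js' : s \in `[- (l / 2), l / 2]%classic by rewrite inE.
have Jt' : t \in `[- (l / 2), l / 2]%classic by rewrite inE.
exact: (inj s t Js' Jt' E1).
Qed.

End Main.

Unset Implicit Arguments.

Theorem proposition2p21 (R : realType) (closed : bool) (l : R)
    (c : R -> 'rV[R]_3) (alpha : R -> R) :
  curve_data closed l c alpha ->
  embedding_germ closed l (normal_form c alpha) ->
  exists eps0 : R, 0 < eps0 /\
    forall eps : R, 0 < eps < eps0 ->
      ((fun p => normal_form c alpha p.1 p.2) @` Omega closed l eps)
        `&` ((fun p => dual_form c alpha p.1 p.2) @` Omega closed l eps)
        = c @` Jset closed l
      /\ (forall p q, Omega closed l eps p -> Omega closed l eps q ->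
            origami c alpha p.1 p.2 = origami c alpha q.1 q.2 ->
            eqJ closed l p.1 q.1 /\ p.2 = q.2).
Proof.
case: closed; [exact: main_closed | exact: main_open].
Qed.
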